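(* Let $\mathrm{Pol}=(\mathrm{Pol}_1,\mathrm{Pol}_2):\mathrm{SL}(2,\mathbb C)\to\mathrm{SL}(2,\mathbb C)^{++}\times\mathrm{SU}(2)$ be the polar decomposition $A=\mathrm{Pol}_1(A)\mathrm{Pol}_2(A)$. For all $A\in\mathrm{SL}(2,\mathbb C)$, $\|d\mathrm{Pol}_2(A)\|\le|A|$.
   Context: $\mathrm{SL}(2,\mathbb C)^{++}$ denotes the Hermitian positive definite elements of $\mathrm{SL}(2,\mathbb C)$. $|\cdot|$ is the Frobenius norm $|A|=(\sum_{i,j}|a_{ij}|^2)^{1/2}$ on $2\times2$ complex matrices (used on tangent spaces of $\mathrm{SL}(2,\mathbb C)$ and $\mathrm{SU}(2)$), and $\|d\mathrm{Pol}_2(A)\|$ is the corresponding operator norm of the differential. *)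

(* Defs.v *)
From HB Require Import structures.
From mathcomp Require Import all_boot all_order all_algebra.
From mathcomp Require Import all_classical all_reals all_analysis.
From mathcomp Require Import complex.
Set Implicit Arguments. Unset Strict Implicit. Unset Printing Implicit Defensive.
Import Order.TTheory GRing.Theory Num.Theory.
Import numFieldNormedType.Exports.
Local Open Scope ring_scope.
Local Open Scope classical_set_scope.

Section Defs.
Variable R : realType.

Definition ctmx m n (A : 'M[R[i]]_(m, n)) : 'M[R[i]]_(n, m) := (map_mx conjc A)^T.

Definition SL2 (A : 'M[R[i]]_2) : Prop := \det A = 1.

Definition herm_pd (P : 'M[R[i]]_2) : Prop :=
  ctmx P = P /\
  forall v : 'cV[R[i]]_2, v != 0 -> 0 < complex.Re ((ctmx v *m P *m v) 0 0).

Definition SL2pp (P : 'M[R[i]]_2) : Prop := SL2 P /\ herm_pd P.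

Definition SU2 (U : 'M[R[i]]_2) : Prop := ctmx U *m U = 1%:M /\ \det U = 1.

Definition frob (A : 'M[R[i]]_2) : R :=
  Num.sqrt (\sum_(i < 2) \sum_(j < 2) (complex.Re (A i j) ^+ 2 + complex.Im (A i j) ^+ 2)).

Definition has_deriv0 (g : R -> 'M[R[i]]_2) (V : 'M[R[i]]_2) : Prop :=
  (fun t : R => frob ((Complex t^-1 0) *: (g t - g 0) - V)) @ 0^' --> (0 : R).

Definition is_polar_decomp (Pol1 Pol2 : 'M[R[i]]_2 -> 'M[R[i]]_2) : Prop :=
  forall A, SL2 A -> [/\ SL2pp (Pol1 A), SU2 (Pol2 A) & A = Pol1 A *m Pol2 A].

End Defs.

(* Main.v *)
Require Import Defs.
From HB Require Import structures.
From mathcomp Require Import all_boot all_order all_algebra.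
From mathcomp Require Import all_classical all_reals all_analysis.
From mathcomp Require Import complex.
From mathcomp Require Import ring lra.
Import Order.TTheory GRing.Theory Num.Theory.
Import numFieldNormedType.Exports.
Local Open Scope ring_scope.

Section Alg.
Variable R : realType.
Local Notation C := (R[i]).
Local Notation M := ('M[R[i]]_2).

Lemma ord2P (P : 'I_2 -> Prop) : P 0 -> P 1 -> forall i, P i.
Proof.
move=> H0 H1 [[|[|//]] Hi].
- by rewrite (_ : Ordinal Hi = 0) //; apply/val_inj.
- by rewrite (_ : Ordinal Hi = 1) //; apply/val_inj.
Qed.

Lemma mx2P (X Y : M) : X 0 0 = Y 0 0 -> X 0 1 = Y 0 1 -> X 1 0 = Y 1 0 -> X 1 1 = Y 1 1 -> X = Y.
Proof.
move=> h1 h2 h3 h4; apply/matrixP; apply: ord2P; apply: ord2P => //.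
Qed.

Lemma sum2 (V : zmodType) (F : 'I_2 -> V) : \sum_(i < 2) F i = F 0 + F 1.
Proof.
by rewrite big_ord_recl big_ord1; congr (_ + F _); apply/val_inj.
Qed.

Lemma det2 (X : M) : \det X = X 0 0 * X 1 1 - X 0 1 * X 1 0.
Proof.
rewrite (expand_det_row _ 0) !big_ord_recl big_ord0 /cofactor !det_mx11 /=.
rewrite !mxE /=.
have E1 : lift 0 0 = 1 :> 'I_2 by apply/val_inj.
have E2 : lift ord0 ord0 = 1 :> 'I_2 by apply/val_inj.
have E3 : lift (lift ord0 ord0) 0 = 0 :> 'I_2 by apply/val_inj.
have E4 : lift 1 0 = 0 :> 'I_2 by apply/val_inj.
have E5 : ord0 = 0 :> 'I_2 by apply/val_inj.
rewrite ?E1 ?E2 ?E3 ?E4 ?E5 /bump /= expr0 expr1 !mul1r addr0 mulN1r; ring.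
Qed.

Lemma adj00 (X : M) : \adj X 0 0 = X 1 1.
Proof.
rewrite !mxE /cofactor det_mx11 !mxE /= expr0 mul1r.
by congr (X _ _); apply/val_inj.
Qed.
Lemma adj01 (X : M) : \adj X 0 1 = - X 0 1.
Proof.
rewrite !mxE /cofactor det_mx11 !mxE /= expr1 mulN1r.
by congr (- X _ _); apply/val_inj.
Qed.
Lemma adj10 (X : M) : \adj X 1 0 = - X 1 0.
Proof.
rewrite !mxE /cofactor det_mx11 !mxE /= expr1 mulN1r.
by congr (- X _ _); apply/val_inj.
Qed.
Lemma adj11 (X : M) : \adj X 1 1 = X 0 0.
Proof.
rewrite !mxE /cofactor det_mx11 !mxE /= expr2 mulN1r opprK mul1r.
by congr (X _ _); apply/val_inj.
Qed.

Lemma addmxE (X Y : M) i j : (X + Y) i j = X i j + Y i j.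
Proof. by rewrite mxE. Qed.

Lemma mulmx2E m p (X : 'M[C]_(m,2)) (Y : 'M[C]_(2,p)) i j : (X *m Y) i j = X i 0 * Y 0 j + X i 1 * Y 1 j.
Proof. by rewrite !mxE sum2. Qed.

Lemma tr2 (X : M) : \tr X = X 0 0 + X 1 1.
Proof. by rewrite /mxtrace sum2. Qed.

Lemma ctmxE m n (X : 'M[C]_(m, n)) i j : ctmx X i j = (X j i)^*%C.
Proof. by rewrite /ctmx !mxE. Qed.

Lemma adjM2 (X Y : M) : \adj (X *m Y) = \adj Y *m \adj X.
Proof.
apply: mx2P; rewrite !mulmx2E ?adj00 ?adj01 ?adj10 ?adj11 !mulmx2E; ring.
Qed.

Lemma ctmx_mul (X Y : M) : ctmx (X *m Y) = ctmx Y *m ctmx X.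
Proof. by rewrite /ctmx map_mxM trmx_mul. Qed.

Lemma ctmx_adj (X : M) : ctmx (\adj X) = \adj (ctmx X).
Proof. by rewrite /ctmx map_mx_adj trmx_adj. Qed.

Lemma ctmxK (X : M) : ctmx (ctmx X) = X.
Proof. by apply/matrixP => i j; rewrite !ctmxE conjcK. Qed.

Lemma adj_plus (X : M) : X + \adj X = (\tr X)%:M.
Proof.
apply: mx2P; rewrite !addmxE ?adj00 ?adj01 ?adj10 ?adj11 ![_%:M _ _]mxE tr2 /=; ring.
Qed.

Lemma Bm_ex : {B : M -> M | forall X, B X = X + ctmx (\adj X)}.
Proof. by exists (fun X => X + ctmx (\adj X)). Qed.
Definition Bm : M -> M := proj1_sig Bm_ex.
Lemma BmE (X : M) : Bm X = X + ctmx (\adj X).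
Proof. exact: (proj2_sig Bm_ex). Qed.

Lemma Bm_polar (P U : M) : ctmx P = P -> \adj U = ctmx U -> Bm (P *m U) = \tr P *: U.
Proof.
move=> hP hU; rewrite BmE adjM2 ctmx_mul hU ctmxK ctmx_adj hP.
by rewrite -mulmxDl adj_plus mul_scalar_mx.
Qed.


Local Notation re := (@complex.Re R).
Local Notation im := (@complex.Im R).

Definition S2 (X : M) : R :=
  \sum_(i < 2) \sum_(j < 2) (complex.Re (X i j) ^+ 2 + complex.Im (X i j) ^+ 2).

Lemma S2E (X : M) : S2 X = re (X 0 0) ^+ 2 + im (X 0 0) ^+ 2 + re (X 0 1) ^+ 2 + im (X 0 1) ^+ 2
  + re (X 1 0) ^+ 2 + im (X 1 0) ^+ 2 + re (X 1 1) ^+ 2 + im (X 1 1) ^+ 2.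
Proof. rewrite /S2 !sum2; ring. Qed.

Lemma S2_ge0 (X : M) : 0 <= S2 X.
Proof.
rewrite S2E; set a := re _; set b := im _; set c := re _; set d := im _.
set e := re _; set f := im _; set g := re _; set h := im _.
have := sqr_ge0 a; have := sqr_ge0 b; have := sqr_ge0 c; have := sqr_ge0 d.
have := sqr_ge0 e; have := sqr_ge0 f; have := sqr_ge0 g; have := sqr_ge0 h.
lra.
Qed.

Lemma Bm00 (X : M) : Bm X 0 0 = X 0 0 + (X 1 1)^*%C.
Proof. by rewrite BmE addmxE ctmxE adj00. Qed.
Lemma Bm01 (X : M) : Bm X 0 1 = X 0 1 - (X 1 0)^*%C.
Proof. by rewrite BmE addmxE ctmxE adj10 rmorphN. Qed.
Lemma Bm10 (X : M) : Bm X 1 0 = X 1 0 - (X 0 1)^*%C.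
Proof. by rewrite BmE addmxE ctmxE adj01 rmorphN. Qed.
Lemma Bm11 (X : M) : Bm X 1 1 = X 1 1 + (X 0 0)^*%C.
Proof. by rewrite BmE addmxE ctmxE adj11. Qed.

Lemma detBm (X : M) : \det (Bm X) = Complex (S2 X + 2 * re (\det X)) 0.
Proof.
rewrite !det2 Bm00 Bm01 Bm10 Bm11 S2E.
move: (X 0 0) (X 0 1) (X 1 0) (X 1 1) => [a1 a2] [b1 b2] [c1 c2] [d1 d2].
apply/eqP; rewrite eq_complex /=; apply/andP; split; apply/eqP; ring.
Qed.


Lemma conj_real (z : C) : z^*%C = z -> im z = 0.
Proof. case: z => a b [] /= h; lra. Qed.

Lemma pd_entry (P : M) (k : 'I_2) : herm_pd P -> 0 < re (P k k).
Proof.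
case=> _ hpd.
have := hpd (delta_mx k 0).
have nz : delta_mx k 0 != 0 :> 'cV[C]_2.
  apply/eqP => /matrixP /(_ k 0); rewrite !mxE !eqxx /=.
  by move/eqP; rewrite oner_eq0.
move/(_ nz); clear nz.
rewrite !mulmx2E !ctmxE !mxE.
move: k; apply: ord2P => /=; rewrite ?conjc0 ?conjc1 ?mul0r ?mulr0 ?mul1r ?mulr1 ?addr0 ?add0r.
all: move: (P 0 0) (P 0 1) (P 1 0) (P 1 1) => [a1 a2] [b1 b2] [c1 c2] [d1 d2] /=; lra.
Qed.

Lemma herm_tr (P : M) : herm_pd P -> exists2 c : R, 0 < c & \tr P = Complex c 0.
Proof.
move=> hP; have [hh _] := hP.
have h0 : im (P 0 0) = 0.
  by apply: conj_real; rewrite -ctmxE hh.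
have h1 : im (P 1 1) = 0.
  by apply: conj_real; rewrite -ctmxE hh.
exists (re (P 0 0) + re (P 1 1)).
  by apply: addr_gt0; apply: pd_entry.
rewrite tr2; move: h0 h1; case: (P 0 0) => a b; case: (P 1 1) => c d /= -> ->.
by apply/eqP; rewrite eq_complex /= addr0 !eqxx.
Qed.

Lemma SU2_adj (U : M) : SU2 U -> \adj U = ctmx U.
Proof.
case=> h1 h2.
have h3 := mulmx1C h1.
by rewrite -[\adj U]mulmx1 -h3 mulmxA mul_adj_mx h2 mul1mx.
Qed.

Definition F2 (X : M) : M := Complex (Num.sqrt (S2 X + 2))^-1 0 *: Bm X.

Lemma polar_formula (Pol1 Pol2 : M -> M) (A : M) :
  is_polar_decomp Pol1 Pol2 -> SL2 A -> Pol2 A = F2 A.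
Proof.
move=> hpol hA; have [[hP1 hP2] hU hAe] := hpol A hA.
have hB : Bm A = \tr (Pol1 A) *: Pol2 A.
  by rewrite {1}hAe; apply: Bm_polar; [case: hP2 | exact: SU2_adj].
have [c c0 hc] := herm_tr _ hP2.
have hdet := detBm A.
rewrite hB detZ hc (proj2 hU) mulr1 hA /= mulr1 in hdet.
have hc2 : c ^+ 2 = S2 A + 2.
  by move: hdet; rewrite expr2 /= => -[<- _]; rewrite !mul0r subr0 expr2.
have hcs : c = Num.sqrt (S2 A + 2) by rewrite -hc2 sqrtr_sqr gtr0_norm.
rewrite /F2 hB hc scalerA -hcs.
have -> : Complex c^-1 0 * Complex c 0 = 1.
  apply/eqP; rewrite eq_complex /= !mul0r !mulr0 subr0 addr0 mulVf.
    by rewrite !eqxx.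
  by rewrite gt_eqF.
by rewrite scale1r.
Qed.


Local Open Scope classical_set_scope.

Lemma derive0P (h : R -> R) (l : R) :
  is_derive (0:R) (1:R) h l <-> (fun t : R => t^-1 * (h t - h 0) - l) @ 0^' --> (0:R).
Proof.
have E : (fun t : R => t^-1 *: ((h \o shift 0) (t *: 1) - h 0)) = (fun t => t^-1 * (h t - h 0)).
  by apply/funext => t /=; rewrite addr0 /GRing.scale /= mulr1.
split.
- case=> Hd Hl.
  have : (fun t : R => t^-1 *: ((h \o shift 0) (t *: 1) - h 0)) @ 0^' --> l.
    by rewrite -Hl; exact: Hd.
  by rewrite E => /subr_cvg0.
- move=> /subr_cvg0 H.
  have H' : (fun t : R => t^-1 *: ((h \o shift 0) (t *: 1) - h 0)) @ 0^' --> l by rewrite E.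
  split; first by apply/cvg_ex; exists l.
  by rewrite /derive; apply: cvg_lim.
Qed.

Definition mxderiv (X : R -> M) (D : M) := forall i j,
  is_derive (0:R) (1:R) (fun t => re (X t i j)) (re (D i j)) /\
  is_derive (0:R) (1:R) (fun t => im (X t i j)) (im (D i j)).

Lemma comp_le_S2 (X : M) i j : re (X i j) ^+ 2 <= S2 X /\ im (X i j) ^+ 2 <= S2 X.
Proof.
rewrite S2E.
have := sqr_ge0 (re (X 0 0)); have := sqr_ge0 (im (X 0 0)).
have := sqr_ge0 (re (X 0 1)); have := sqr_ge0 (im (X 0 1)).
have := sqr_ge0 (re (X 1 0)); have := sqr_ge0 (im (X 1 0)).
have := sqr_ge0 (re (X 1 1)); have := sqr_ge0 (im (X 1 1)).
move: i j; apply: ord2P; apply: ord2P => *; split; lra.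
Qed.

Lemma abs_le_frob (x : R) (X : M) : x ^+ 2 <= S2 X -> `|x| <= frob X.
Proof. by move=> h; rewrite -sqrtr_sqr /frob ler_sqrt //; exact: S2_ge0. Qed.

Lemma sq_sum_le (X Y x y : R) : 0 <= x -> 0 <= y -> X <= x ^+ 2 -> Y <= y ^+ 2 ->
  X + Y <= (x + y) ^+ 2.
Proof. move=> hx hy h1 h2; have := mulr_ge0 hx hy; rewrite !expr2 in h1 h2 *; nra. Qed.

Definition Tsum (X : M) : R :=
  `|re (X 0 0)| + `|im (X 0 0)| + (`|re (X 0 1)| + `|im (X 0 1)|) +
  ((`|re (X 1 0)| + `|im (X 1 0)|) + (`|re (X 1 1)| + `|im (X 1 1)|)).

Lemma frob_le_Tsum (X : M) : frob X <= Tsum X.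
Proof.
have hT : 0 <= Tsum X by rewrite /Tsum; do ! apply: addr_ge0.
rewrite /frob -(ger0_norm hT) -sqrtr_sqr ler_sqrt ?sqr_ge0 //.
have -> : \sum_(i < 2) \sum_(j < 2) (re (X i j) ^+ 2 + im (X i j) ^+ 2) =
  re (X 0 0) ^+ 2 + im (X 0 0) ^+ 2 + (re (X 0 1) ^+ 2 + im (X 0 1) ^+ 2) +
  ((re (X 1 0) ^+ 2 + im (X 1 0) ^+ 2) + (re (X 1 1) ^+ 2 + im (X 1 1) ^+ 2)).
  by rewrite !sum2 addrA.
have H (x : R) : x ^+ 2 <= `|x| ^+ 2 by rewrite real_normK ?num_real.
repeat apply: sq_sum_le; try exact: H; by do ? apply: addr_ge0.
Qed.

Lemma cvg0D (f g : R -> R) : f @ 0^' --> (0:R) -> g @ 0^' --> (0:R) ->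
  (fun t => f t + g t) @ 0^' --> (0:R).
Proof. by move=> hf hg; have := cvgD hf hg; rewrite addr0; apply. Qed.

Lemma reQ (g : R -> M) (V : M) t i j :
  re ((Complex t^-1 0 *: (g t - g 0) - V) i j) = t^-1 * (re (g t i j) - re (g 0 i j)) - re (V i j).
Proof.
rewrite !mxE; move: (g t i j) (g 0 i j) (V i j) => [a1 a2] [b1 b2] [c1 c2] /=; ring.
Qed.
Lemma imQ (g : R -> M) (V : M) t i j :
  im ((Complex t^-1 0 *: (g t - g 0) - V) i j) = t^-1 * (im (g t i j) - im (g 0 i j)) - im (V i j).
Proof.
rewrite !mxE; move: (g t i j) (g 0 i j) (V i j) => [a1 a2] [b1 b2] [c1 c2] /=; ring.
Qed.

Lemma has_deriv0_mx (g : R -> M) (V : M) : has_deriv0 g V -> mxderiv g V.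
Proof.
move=> hd i j; split; apply/derive0P; apply/norm_cvg0P;
  apply: (@squeeze_cvgr _ _ _ _ (cst 0) _ _ _ 0 (cvg_cst _) hd);
  apply: filterE => t /=; rewrite normr_ge0 /=.
- by rewrite -reQ; apply: abs_le_frob; case: (comp_le_S2 (Complex t^-1 0 *: (g t - g 0) - V) i j).
- by rewrite -imQ; apply: abs_le_frob; case: (comp_le_S2 (Complex t^-1 0 *: (g t - g 0) - V) i j).
Qed.

Lemma mx_has_deriv0 (g : R -> M) (V : M) : mxderiv g V -> has_deriv0 g V.
Proof.
move=> hd; rewrite /has_deriv0.
set Q := fun t => Complex t^-1 0 *: (g t - g 0) - V.
have hc : forall i j, (fun t => `|re (Q t i j)|) @ 0^' --> (0:R) /\
                      (fun t => `|im (Q t i j)|) @ 0^' --> (0:R).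
  move=> i j; have [h1 h2] := hd i j; split; apply/(norm_cvg0P (fun t => _)).
  - by rewrite /Q; under eq_fun do rewrite reQ; apply/derive0P.
  - by rewrite /Q; under eq_fun do rewrite imQ; apply/derive0P.
have hT : (fun t => Tsum (Q t)) @ 0^' --> (0:R).
  rewrite /Tsum.
  have [a1 a2] := hc 0 0; have [b1 b2] := hc 0 1; have [c1 c2] := hc 1 0; have [d1 d2] := hc 1 1.
  by repeat apply: cvg0D.
apply: (@squeeze_cvgr _ _ _ _ (cst 0) _ _ _ 0 (cvg_cst _) hT).
apply: filterE => t /=; rewrite frob_le_Tsum andbT /frob; exact: sqrtr_ge0.
Qed.


Notation D0 h l := (is_derive (0:R) (1:R) h l).

Lemma dcst (c : R) : D0 (fun _ => c) 0.
Proof. exact: is_derive_cst. Qed.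
Lemma dD (f g : R -> R) a b : D0 f a -> D0 g b -> D0 (fun t => f t + g t) (a + b).
Proof. by move=> h1 h2; have := is_deriveD h1 h2. Qed.
Lemma dB (f g : R -> R) a b : D0 f a -> D0 g b -> D0 (fun t => f t - g t) (a - b).
Proof. by move=> h1 h2; have := is_deriveB h1 h2. Qed.
Lemma dM (f g : R -> R) a b : D0 f a -> D0 g b -> D0 (fun t => f t * g t) (f 0 * b + g 0 * a).
Proof. by move=> h1 h2; have := is_deriveM h1 h2. Qed.
Lemma dsq (f : R -> R) a : D0 f a -> D0 (fun t => f t ^+ 2) (2 * f 0 * a).
Proof.
move=> h; have h2 := @dM f f a a h h.
have -> : (fun t => f t ^+ 2) = (fun t => f t * f t) by apply/funext => t; rewrite expr2.
by apply: is_derive_eq h2 _; ring.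
Qed.
Lemma dsqrt (f : R -> R) a : 0 < f 0 -> D0 f a -> D0 (fun t => Num.sqrt (f t)) ((2 * Num.sqrt (f 0))^-1 * a).
Proof. by move=> h0 h; have := @is_derive1_comp _ Num.sqrt f 0 _ _ (is_derive1_sqrt h0) h. Qed.
Lemma dinv (f : R -> R) a : f 0 != 0 -> D0 f a -> D0 (fun t => (f t)^-1) (- (f 0) ^- 2 * a).
Proof. by move=> h0 h; have := is_deriveV h0 h. Qed.


Lemma reCs (a : R) (z : C) : re (Complex a 0 * z) = a * re z.
Proof. case: z => x y /=; ring. Qed.
Lemma imCs (a : R) (z : C) : im (Complex a 0 * z) = a * im z.
Proof. case: z => x y /=; ring. Qed.
Lemma reD (u v : C) : re (u + v) = re u + re v.
Proof. by case: u; case: v. Qed.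
Lemma imD (u v : C) : im (u + v) = im u + im v.
Proof. by case: u; case: v. Qed.
Lemma reDJ (u v : C) : re (u + v^*%C) = re u + re v.
Proof. by case: u; case: v. Qed.
Lemma imDJ (u v : C) : im (u + v^*%C) = im u - im v.
Proof. by case: u; case: v. Qed.
Lemma reBJ (u v : C) : re (u - v^*%C) = re u - re v.
Proof. by case: u; case: v. Qed.
Lemma imBJ (u v : C) : im (u - v^*%C) = im u + im v.
Proof. case: u; case: v => /= *; ring. Qed.

Lemma mxd_scale (s : R -> R) s' (X : R -> M) (D : M) : D0 s s' -> mxderiv X D ->
  mxderiv (fun t => Complex (s t) 0 *: X t) (Complex (s 0) 0 *: D + Complex s' 0 *: X 0).
Proof.
move=> hs hX i j; have [h1 h2] := hX i j; split.
- under eq_fun do rewrite mxE reCs.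
  apply: is_derive_eq (@dM _ _ _ _ hs h1) _.
  by rewrite addmxE reD !mxE !reCs; ring.
- under eq_fun do rewrite mxE imCs.
  apply: is_derive_eq (@dM _ _ _ _ hs h2) _.
  by rewrite addmxE imD !mxE !imCs; ring.
Qed.

Lemma mxd_Bm (X : R -> M) (D : M) : mxderiv X D -> mxderiv (fun t => Bm (X t)) (Bm D).
Proof.
move=> hX; have [a1 a2] := hX 0 0; have [b1 b2] := hX 0 1.
have [c1 c2] := hX 1 0; have [d1 d2] := hX 1 1.
apply: ord2P; apply: ord2P; split.
- under eq_fun do rewrite Bm00 reDJ. by rewrite Bm00 reDJ; apply: dD.
- under eq_fun do rewrite Bm00 imDJ. by rewrite Bm00 imDJ; apply: dB.
- under eq_fun do rewrite Bm01 reBJ. by rewrite Bm01 reBJ; apply: dB.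
- under eq_fun do rewrite Bm01 imBJ. by rewrite Bm01 imBJ; apply: dD.
- under eq_fun do rewrite Bm10 reBJ. by rewrite Bm10 reBJ; apply: dB.
- under eq_fun do rewrite Bm10 imBJ. by rewrite Bm10 imBJ; apply: dD.
- under eq_fun do rewrite Bm11 reDJ. by rewrite Bm11 reDJ; apply: dD.
- under eq_fun do rewrite Bm11 imDJ. by rewrite Bm11 imDJ; apply: dB.
Qed.

Definition ip (X Y : M) : R :=
  re (X 0 0) * re (Y 0 0) + im (X 0 0) * im (Y 0 0) + re (X 0 1) * re (Y 0 1) + im (X 0 1) * im (Y 0 1)
  + re (X 1 0) * re (Y 1 0) + im (X 1 0) * im (Y 1 0) + re (X 1 1) * re (Y 1 1) + im (X 1 1) * im (Y 1 1).

Lemma mxd_S2 (X : R -> M) (D : M) : mxderiv X D -> D0 (fun t => S2 (X t)) (2 * ip (X 0) D).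
Proof.
move=> hX; have [a1 a2] := hX 0 0; have [b1 b2] := hX 0 1.
have [c1 c2] := hX 1 0; have [d1 d2] := hX 1 1.
under eq_fun do rewrite S2E.
eapply is_derive_eq.
  by repeat apply: dD; apply: dsq; eassumption.
have hs : forall x y : R, x *: y = x * y by []. by rewrite /ip !hs; ring.
Qed.

Lemma mxd_sigma (X : R -> M) (D : M) : mxderiv X D ->
  D0 (fun t => (Num.sqrt (S2 (X t) + 2))^-1)
     (- (Num.sqrt (S2 (X 0) + 2)) ^- 2 * ((2 * Num.sqrt (S2 (X 0) + 2))^-1 * (2 * ip (X 0) D + 0))).
Proof.
move=> hX.
have hp : 0 < S2 (X 0) + 2 by apply: ltr_wpDl; [exact: S2_ge0 | exact: ltr0Sn].
apply: dinv; first by rewrite gt_eqF // sqrtr_gt0.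
apply: dsqrt => //. exact: (@dD _ _ _ _ (mxd_S2 _ _ hX) (dcst 2)).
Qed.


Lemma CS8 (x1 x2 x3 x4 x5 x6 x7 x8 y1 y2 y3 y4 y5 y6 y7 y8 : R) :
  (x1*y1 + x2*y2 + x3*y3 + x4*y4 + x5*y5 + x6*y6 + x7*y7 + x8*y8)^+2 <= (x1^+2 + x2^+2 + x3^+2 + x4^+2 + x5^+2 + x6^+2 + x7^+2 + x8^+2) * (y1^+2 + y2^+2 + y3^+2 + y4^+2 + y5^+2 + y6^+2 + y7^+2 + y8^+2).
Proof.
have e : (x1^+2 + x2^+2 + x3^+2 + x4^+2 + x5^+2 + x6^+2 + x7^+2 + x8^+2) * (y1^+2 + y2^+2 + y3^+2 + y4^+2 + y5^+2 + y6^+2 + y7^+2 + y8^+2) - (x1*y1 + x2*y2 + x3*y3 + x4*y4 + x5*y5 + x6*y6 + x7*y7 + x8*y8)^+2 = (x1*y2 - x2*y1)^+2 + (x1*y3 - x3*y1)^+2 + (x1*y4 - x4*y1)^+2 + (x1*y5 - x5*y1)^+2 + (x1*y6 - x6*y1)^+2 + (x1*y7 - x7*y1)^+2 + (x1*y8 - x8*y1)^+2 + (x2*y3 - x3*y2)^+2 + (x2*y4 - x4*y2)^+2 + (x2*y5 - x5*y2)^+2 + (x2*y6 - x6*y2)^+2 + (x2*y7 - x7*y2)^+2 + (x2*y8 - x8*y2)^+2 + (x3*y4 - x4*y3)^+2 + (x3*y5 - x5*y3)^+2 + (x3*y6 - x6*y3)^+2 + (x3*y7 - x7*y3)^+2 +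 (x3*y8 - x8*y3)^+2 + (x4*y5 - x5*y4)^+2 + (x4*y6 - x6*y4)^+2 + (x4*y7 - x7*y4)^+2 + (x4*y8 - x8*y4)^+2 + (x5*y6 - x6*y5)^+2 + (x5*y7 - x7*y5)^+2 + (x5*y8 - x8*y5)^+2 + (x6*y7 - x7*y6)^+2 + (x6*y8 - x8*y6)^+2 + (x7*y8 - x8*y7)^+2 by ring.
rewrite -subr_ge0 e.
have := sqr_ge0 (x1*y2 - x2*y1).
have := sqr_ge0 (x1*y3 - x3*y1).
have := sqr_ge0 (x1*y4 - x4*y1).
have := sqr_ge0 (x1*y5 - x5*y1).
have := sqr_ge0 (x1*y6 - x6*y1).
have := sqr_ge0 (x1*y7 - x7*y1).
have := sqr_ge0 (x1*y8 - x8*y1).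
have := sqr_ge0 (x2*y3 - x3*y2).
have := sqr_ge0 (x2*y4 - x4*y2).
have := sqr_ge0 (x2*y5 - x5*y2).
have := sqr_ge0 (x2*y6 - x6*y2).
have := sqr_ge0 (x2*y7 - x7*y2).
have := sqr_ge0 (x2*y8 - x8*y2).
have := sqr_ge0 (x3*y4 - x4*y3).
have := sqr_ge0 (x3*y5 - x5*y3).
have := sqr_ge0 (x3*y6 - x6*y3).
have := sqr_ge0 (x3*y7 - x7*y3).
have := sqr_ge0 (x3*y8 - x8*y3).
have := sqr_ge0 (x4*y5 - x5*y4).
have := sqr_ge0 (x4*y6 - x6*y4).
have := sqr_ge0 (x4*y7 - x7*y4).
have := sqr_ge0 (x4*y8 - x8*y4).
have := sqr_ge0 (x5*y6 - x6*y5).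
have := sqr_ge0 (x5*y7 - x7*y5).
have := sqr_ge0 (x5*y8 - x8*y5).
have := sqr_ge0 (x6*y7 - x7*y6).
have := sqr_ge0 (x6*y8 - x8*y6).
have := sqr_ge0 (x7*y8 - x8*y7).
lra.
Qed.

Definition Dre (A V : M) : R :=
  re (A 0 0 * V 1 1 + A 1 1 * V 0 0 - A 0 1 * V 1 0 - A 1 0 * V 0 1).

Lemma S2_lin (a b : R) (X Y : M) :
  S2 (Complex a 0 *: X + Complex b 0 *: Y) = a ^+ 2 * S2 X + 2 * a * b * ip X Y + b ^+ 2 * S2 Y.
Proof.
rewrite !S2E /ip !addmxE !mxE.
move: (X 0 0) (X 0 1) (X 1 0) (X 1 1) => [x1 x2] [x3 x4] [x5 x6] [x7 x8].
move: (Y 0 0) (Y 0 1) (Y 1 0) (Y 1 1) => [y1 y2] [y3 y4] [y5 y6] [y7 y8] /=.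
ring.
Qed.

Lemma S2_Bm (X : M) : S2 (Bm X) = 2 * S2 X + 4 * re (\det X).
Proof.
rewrite !S2E det2 Bm00 Bm01 Bm10 Bm11.
move: (X 0 0) (X 0 1) (X 1 0) (X 1 1) => [x1 x2] [x3 x4] [x5 x6] [x7 x8] /=.
ring.
Qed.

Lemma ip_Bm (A V : M) : ip (Bm V) (Bm A) = 2 * ip A V + 2 * Dre A V.
Proof.
rewrite /ip /Dre !Bm00 !Bm01 !Bm10 !Bm11.
move: (A 0 0) (A 0 1) (A 1 0) (A 1 1) => [x1 x2] [x3 x4] [x5 x6] [x7 x8].
move: (V 0 0) (V 0 1) (V 1 0) (V 1 1) => [y1 y2] [y3 y4] [y5 y6] [y7 y8] /=.
ring.
Qed.

Lemma Dre_CS (A V : M) : Dre A V ^+ 2 <= S2 A * S2 V.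
Proof.
rewrite /Dre !S2E.
move: (A 0 0) (A 0 1) (A 1 0) (A 1 1) => [x1 x2] [x3 x4] [x5 x6] [x7 x8].
move: (V 0 0) (V 0 1) (V 1 0) (V 1 1) => [y1 y2] [y3 y4] [y5 y6] [y7 y8] /=.
have := CS8 x1 (-x2) x7 (-x8) (-x3) x4 (-x5) x6 y7 y8 y1 y2 y5 y6 y3 y4.
have -> : x1 * y7 + - x2 * y8 + x7 * y1 + - x8 * y2 + - x3 * y5 + x4 * y6 + - x5 * y3 + x6 * y4
  = x1 * y7 - x2 * y8 + (x7 * y1 - x8 * y2) - (x3 * y5 - x4 * y6) - (x5 * y3 - x6 * y4) by ring.
move=> h; apply: (le_trans h); rewrite le_eqVlt; apply/orP; left; apply/eqP; ring.
Qed.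

Lemma det_le_S2 (X : M) : 2 * re (\det X) <= S2 X.
Proof.
rewrite det2 S2E.
move: (X 0 0) (X 0 1) (X 1 0) (X 1 1) => [x1 x2] [x3 x4] [x5 x6] [x7 x8] /=.
have e : x1 ^+ 2 + x2 ^+ 2 + x3 ^+ 2 + x4 ^+ 2 + x5 ^+ 2 + x6 ^+ 2 + x7 ^+ 2 + x8 ^+ 2
  - 2 * (x1 * x7 - x2 * x8 - (x3 * x5 - x4 * x6))
  = (x1 - x7) ^+ 2 + (x2 + x8) ^+ 2 + (x3 + x5) ^+ 2 + (x4 - x6) ^+ 2 by ring.
rewrite -subr_ge0.
have -> : x1 ^+ 2 + x2 ^+ 2 + x3 ^+ 2 + x4 ^+ 2 + x5 ^+ 2 + x6 ^+ 2 + x7 ^+ 2 + x8 ^+ 2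
  - 2 * (x1 * x7 - x2 * x8 - (x3 * x5 - x4 * x6))
  = (x1 - x7) ^+ 2 + (x2 + x8) ^+ 2 + (x3 + x5) ^+ 2 + (x4 - x6) ^+ 2 by ring.
by do ! apply: addr_ge0; apply: sqr_ge0.
Qed.

Lemma real_bound (SA SV r Dv dv s : R) : 0 <= SV -> 2 <= SA -> 2 * dv <= SV ->
  Dv ^+ 2 <= SA * SV -> 0 < s -> s ^+ 2 = SA + 2 ->
  s^-1 ^+ 2 * (2 * SV + 4 * dv)
  + 2 * s^-1 * (- s ^- 2 * ((2 * s)^-1 * (2 * r + 0))) * (2 * r + 2 * Dv)
  + (- s ^- 2 * ((2 * s)^-1 * (2 * r + 0))) ^+ 2 * (2 * SA + 4 * 1) <= SA * SV.
Proof.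
move=> hSV hSA hdv hCS hs hs2.
have sn0 : s != 0 by rewrite gt_eqF.
set a := s^-1.
have hb : - s ^- 2 * ((2 * s)^-1 * (2 * r + 0)) = - r * a ^+ 3.
  rewrite /a; field; exact: sn0.
rewrite hb.
have ha : a ^+ 2 * (SA + 2) = 1 by rewrite -hs2 /a -exprMn mulVf // expr1n.
set w := a ^+ 2.
have e : a ^+ 2 * (2 * SV + 4 * dv) + 2 * a * (- r * a ^+ 3) * (2 * r + 2 * Dv) +
    (- r * a ^+ 3) ^+ 2 * (2 * SA + 4 * 1)
  = w * (2 * SV + 4 * dv) - w ^+ 2 * (2 * r ^+ 2 + 4 * r * Dv) + 2 * r ^+ 2 * w ^+ 2 * (w * (SA + 2) - 1).
  rewrite /w; ring.
rewrite e /w ha subrr mulr0 addr0.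
clear e.
have hw0 : 0 <= w by rewrite /w sqr_ge0.
have hw4 : 4 * w <= 1.
  have h1 : 0 <= SA - 2 by lra.
  have := mulr_ge0 hw0 h1; move: ha; rewrite -/w; nra.
have T1 : w * (2 * SV + 4 * dv) <= SV by nra.
have T2a : - (2 * r ^+ 2 + 4 * r * Dv) <= 2 * Dv ^+ 2.
  have := sqr_ge0 (r + Dv); rewrite !expr2; nra.
have hw2 : 0 <= w ^+ 2 by apply: sqr_ge0.
have T2b : - w ^+ 2 * (2 * r ^+ 2 + 4 * r * Dv) <= w ^+ 2 * (2 * (SA * SV)).
  rewrite mulNr -mulrN; apply: ler_wpM2l => //; lra.
have hw16 : 16 * w ^+ 2 <= 1 by rewrite expr2; nra.
have hSASV : 0 <= SA * SV by apply: mulr_ge0 => //; lra.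
have T2c : w ^+ 2 * (2 * (SA * SV)) <= SA * SV / 8 by nra.
have T3 : SV + SA * SV / 8 <= SA * SV by nra.
have T2 : - (w ^+ 2 * (2 * r ^+ 2 + 4 * r * Dv)) <= SA * SV / 8.
  by rewrite -mulNr; exact: le_trans T2b T2c.
rewrite -/w; lra.
Qed.

Lemma key_bound (A V : M) : re (\det A) = 1 ->
  frob (Complex (Num.sqrt (S2 A + 2))^-1 0 *: Bm V +
        Complex (- (Num.sqrt (S2 A + 2)) ^- 2 * ((2 * Num.sqrt (S2 A + 2))^-1 * (2 * ip A V + 0))) 0 *: Bm A)
  <= frob A * frob V.
Proof.
move=> hd.
have hSA := S2_ge0 A; have hSV := S2_ge0 V.
have hp : 0 <= S2 A + 2 by apply: addr_ge0.
set s := Num.sqrt (S2 A + 2).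
set b := - s ^- 2 * _.
have E := S2_lin s^-1 b (Bm V) (Bm A).
rewrite (S2_Bm V) (S2_Bm A) (ip_Bm A V) hd in E.
have fE : forall X, frob X = Num.sqrt (S2 X) by [].
rewrite !fE -sqrtrM // ler_sqrt; last by apply: mulr_ge0.
rewrite E /b.
apply: real_bound => //.
- by have := det_le_S2 A; rewrite hd mulr1.
- exact: det_le_S2.
- exact: Dre_CS.
- rewrite /s sqrtr_gt0; lra.
- by rewrite /s sqr_sqrtr.
Qed.

Lemma main_lemma (Pol1 Pol2 : M -> M) :
  is_polar_decomp Pol1 Pol2 ->
  forall A : M, SL2 A ->
  forall (g : R -> M) (V : M),
    (forall t, SL2 (g t)) -> g 0 = A -> has_deriv0 g V ->
    exists W : M,
      has_deriv0 (Pol2 \o g) W /\ frob W <= frob A * frob V.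
Proof.
move=> hpol A hA g V hSL hg0 hd.
have hx := has_deriv0_mx _ _ hd.
have eP : Pol2 \o g = fun t => Complex (Num.sqrt (S2 (g t) + 2))^-1 0 *: Bm (g t).
  by apply/funext => t /=; rewrite (polar_formula _ _ _ hpol (hSL t)).
have hs := mxd_sigma _ _ hx.
have hB := mxd_Bm _ _ hx.
have hW := mxd_scale _ _ _ _ hs hB.
rewrite hg0 in hW.
eexists; split.
  by rewrite eP; exact: (mx_has_deriv0 _ _ hW).
apply: key_bound.
by rewrite hA.
Qed.

End Alg.

Theorem proposition13 (R : realType) (Pol1 Pol2 : 'M[R[i]]_2 -> 'M[R[i]]_2) :
  is_polar_decomp Pol1 Pol2 ->
  forall A : 'M[R[i]]_2, SL2 A ->
  forall (g : R -> 'M[R[i]]_2) (V : 'M[R[i]]_2),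
    (forall t, SL2 (g t)) -> g 0 = A -> has_deriv0 g V ->
    exists W : 'M[R[i]]_2,
      has_deriv0 (Pol2 \o g) W /\ frob W <= frob A * frob V.
Proof. exact: main_lemma. Qed.
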